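(* Let $s\ge 1$ and $n_0,\dots,n_s,r$ be positive integers. If there exist integers $t\ge r$ and $l_0,\dots,l_s$ with $0\le l_i\le t$ for all $i$ and $\sum_{i=0}^s l_i=t$, such that $$\sum_{i=0}^s 2^t e^{-\frac{(t-l_i)_r}{(t)_r}n_i}\le 1,$$ then $ch(K_{n_0,\dots,n_s})>r$.
   Context: For an integer $a$ and a positive integer $r$, $(a)_r=a(a-1)\cdots(a-r+1)$ denotes the falling factorial. For a graph $G=(V,E)$, the choice number $ch(G)$ is the minimum integer $k$ such that for every assignment of a list $S(v)$ of at least $k$ colors to each vertex $v\in V$, there is a proper vertex coloring of $G$ assigning to each vertex $v$ a color from $S(v)$. $K_{n_0,\dots,n_s}$ denotes the complete $(s+1)$-partite graph with parts of sizes $n_0,\dots,n_s$. *)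

(* Defs.v *)
From Stdlib Require Import Reals.
From mathcomp Require Import all_boot.
Set Implicit Arguments. Unset Strict Implicit. Unset Printing Implicit Defensive.

Definition list_colorable (V : finType) (adj : rel V) (L : V -> seq nat) : Prop :=
  exists c : V -> nat,
    (forall v, c v \in L v) /\ (forall u v, adj u v -> c u != c v).

Definition choosable (V : finType) (adj : rel V) (k : nat) : Prop :=
  forall L : V -> seq nat, (forall v, k <= size (undup (L v))) ->
    list_colorable adj L.

(* ch(G) > r, with ch(G) = min { k | G is k-choosable }: i.e. every k for which
   G is k-choosable exceeds r. *)
Definition choice_number_gt (V : finType) (adj : rel V) (r : nat) : Prop :=
  forall k, choosable adj k -> r < k.

Definition Kmulti_vertex (s : nat) (n : 'I_s.+1 -> nat) : finType :=
  {i : 'I_s.+1 & 'I_(n i)}.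

Definition Kmulti_adj (s : nat) (n : 'I_s.+1 -> nat) : rel (Kmulti_vertex n) :=
  fun u v => tag u != tag v.

(* Main.v *)
Require Import Defs.
From Stdlib Require Import Reals Lra.
From mathcomp Require Import all_boot.

Lemma card_fam (V : finType) (U : finType) (P : V -> pred U) :
  #|[set f : {ffun V -> U} | [forall v, f v \in P v]]| = \prod_(v : V) #|P v|.
Proof.
rewrite (eq_card (B := (family P : simpl_pred _))); last first.
  by move=> f; rewrite inE; apply/forallP/familyP.
by rewrite card_family foldrE big_map big_enum.
Qed.

Lemma union_bound (X I : finType) (P : pred I) (B : I -> {set X}) :
  #|\bigcup_(i | P i) B i| <= \sum_(i | P i) #|B i|.
Proof.
apply: (big_ind2 (fun (x : {set X}) y => #|x| <= y)).
- by rewrite cards0.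
- move=> x1 x2 y1 y2 h1 h2; apply: leq_trans (leq_card_setU _ _) _.
  exact: leq_add.
- by [].
Qed.

Lemma extend_set (T : finType) (S : {set T}) l :
  #|S| <= l <= #|T| -> exists X : {set T}, S \subset X /\ #|X| = l.
Proof.
move=> /andP[h1 h2].
have [d hd] : exists d, l = #|S| + d by exists (l - #|S|); rewrite subnKC.
elim: d S hd h1 => [|d IH] S hd h1.
  by exists S; rewrite hd addn0.
have : #|S| < #|T| by rewrite (leq_trans _ h2) // hd addnS ltnS leq_addr.
move=> hlt.
have : 0 < #|~: S| by move: (cardsC S) hlt => <-; rewrite -{1}(addn0 #|S|) ltn_add2l.
case/card_gt0P => x; rewrite in_setC => xS.
have e1 : l = #|x |: S| + d by rewrite cardsU1 xS hd addnS add1n.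
have e2 : #|x |: S| <= l by rewrite cardsU1 xS add1n hd addnS ltnS leq_addr.
have [X [sX cX]] := IH (x |: S) e1 e2.
by exists X; split => //; apply: subset_trans sX; apply: subsetUr.
Qed.

Lemma draws_lt (t l : nat) : 0 < t ->
  'C(t, l) < 2 ^ t.
Proof.
move=> t0.
have -> : 'C(t, l) = #|[set A : {set 'I_t} | #|A| == l]| by rewrite card_draws card_ord.
have -> : 2 ^ t = #|powerset [set: 'I_t]| by rewrite card_powerset cardsT card_ord.
apply: proper_card; rewrite properEneq; apply/andP; split.
  apply/eqP => E.
  case: (eqVneq l 0) => [l0|l0].
    have : [set: 'I_t] \in powerset [set: 'I_t] by rewrite powersetE.
    rewrite -E inE cardsT card_ord l0 => /eqP ht; by rewrite ht in t0.
  have : set0 \in powerset [set: 'I_t] by rewrite powersetE sub0set.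
  by rewrite -E inE cards0 eq_sym (negPf l0).
by apply/subsetP => A _; rewrite powersetE subsetT.
Qed.

Lemma disj_sum (I T : finType) (S : I -> {set T}) :
  (forall i j, i != j -> [disjoint S i & S j]) -> \sum_i #|S i| <= #|T|.
Proof.
move=> hd.
have -> : \sum_i #|S i| = \sum_i \sum_(x : T) (x \in S i : nat).
  by apply: eq_bigr => i _; rewrite -sum1_card big_mkcond.
rewrite exchange_big /= -sum1_card; apply: leq_sum => x _.
case: (pickP (fun i => x \in S i)) => [i0 h|none].
  rewrite (bigD1 i0) //= h big1 // => j ji0.
  by rewrite (disjointFl (hd _ _ ji0) h).
by rewrite big1 // => i _; rewrite none.
Qed.

Lemma fiber_card (s : nat) (n : 'I_s.+1 -> nat) (i : 'I_s.+1) :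
  n i <= #|[pred v : Kmulti_vertex n | tag v == i]|.
Proof.
pose g := fun j : 'I_(n i) => (Tagged (fun k => 'I_(n k)) j : Kmulti_vertex n).
have ginj : injective g by move=> a b h; exact: (eq_from_Tagged h).
rewrite -{1}(card_ord (n i)) -cardsT -(card_imset _ ginj).
apply: subset_leq_card; apply/subsetP => v /imsetP [j _ ->].
by rewrite inE /=.
Qed.

Open Scope R_scope.

Lemma exp_pow_n (x : R) (k : nat) : exp x ^ k = exp (x * INR k).
Proof.
elim: k => [|k IH]; first by rewrite /= Rmult_0_r exp_0.
rewrite [exp x ^ _]/= IH S_INR -exp_plus; f_equal; ring.
Qed.

Lemma pow_decr (x : R) (a b : nat) : 0 <= x <= 1 -> (a <= b)%N -> x ^ b <= x ^ a.
Proof.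
move=> [h0 h1] hab; rewrite -(subnKC hab) -plusE pow_add.
have : x ^ (b - a) <= 1.
  elim: (b - a)%N => [|k IH] /=; first lra.
  have := pow_le x k h0; nra.
have := pow_le x a h0; nra.
Qed.

Lemma Rsum_lt (m : nat) (f g : 'I_m.+1 -> R) :
  (forall i, f i < g i) ->
  \big[Rplus/R0]_(i < m.+1) f i < \big[Rplus/R0]_(i < m.+1) g i.
Proof.
move=> h; rewrite !big_ord_recl; apply: Rplus_lt_le_compat; first exact: h.
apply: (big_ind2 (fun x y => x <= y)); first lra.
  move=> *; lra.
by move=> i _; apply: Rlt_le; apply: h.
Qed.

Lemma INR_sum (I : finType) (P : pred I) (F : I -> nat) :
  INR (\sum_(i | P i) F i) = \big[Rplus/R0]_(i | P i) INR (F i).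
Proof. by apply: (big_morph INR plus_INR). Qed.
Close Scope R_scope.

Open Scope R_scope.

Lemma INR_expn (a k : nat) : INR (a ^ k)%N = INR a ^ k.
Proof.
elim: k => [|k IH]; first by rewrite expn0.
by rewrite expnS mult_INR IH.
Qed.

Lemma INR_subn (a b : nat) : (b <= a)%N -> INR (a - b)%N = INR a - INR b.
Proof. by move=> h; rewrite subnE minus_INR //; apply/leP. Qed.

Lemma real_part (s t r : nat) (n l m K : 'I_s.+1 -> nat) (N : nat) :
  (0 < r)%N -> (r <= t)%N -> (forall i, l i <= t)%N ->
  (forall i, n i <= m i)%N ->
  (forall i, N = 'C(t, r) ^ m i * 'C(t, r) ^ K i)%N ->
  \big[Rplus/R0]_(i < s.+1)
     (INR 2 ^ t * exp (- (INR ((t - l i) ^_ r) / INR (t ^_ r) * INR (n i)))) <= R1 ->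
  (\sum_(i < s.+1) 'C(t, l i) * (('C(t, r) - 'C(t - l i, r)) ^ m i * 'C(t, r) ^ K i) < N)%N.
Proof.
move=> r0 rt lt mn cardG hR.
pose A := 'C(t, r). pose B i := 'C(t - l i, r).
have A0 : (0 < A)%N by rewrite bin_gt0.
have BA : forall i, (B i <= A)%N by move=> i; rewrite /B /A leq_bin2l // leq_subr.
have AR : 0 < INR A by apply: lt_0_INR; apply/ltP.
apply/ltP; apply: INR_lt.
rewrite INR_sum.
pose q i := INR (B i) / INR A.
have hq : forall i, INR ((t - l i) ^_ r) / INR (t ^_ r) = q i.
  move=> i; rewrite /q /B /A -!bin_ffact !mult_INR; field; split;
    apply: not_0_INR; apply/eqP; rewrite -lt0n; first exact: A0.
  exact: fact_gt0.
have hterm : forall i, INR ('C(t, l i) * ((A - B i) ^ m i * A ^ K i))%N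
    = INR N * (INR 'C(t, l i) * (1 - q i) ^ m i).
  move=> i; rewrite (cardG i) !mult_INR !INR_expn INR_subn; last exact: BA.
  rewrite -/A.
  have e : INR A - INR (B i) = INR A * (1 - q i).
    by rewrite /q; field; apply: Rgt_not_eq.
  rewrite e Rpow_mult_distr; ring.
rewrite (eq_bigr _ (fun i _ => hterm i)).
rewrite -(big_morph (fun x => INR N * x) (Rmult_plus_distr_l _) (Rmult_0_r _)).
have G0 : 0 < INR N.
  by apply: lt_0_INR; apply/ltP; rewrite (cardG ord0) muln_gt0 !expn_gt0 A0.
suff : \big[Rplus/R0]_(i < s.+1) (INR 'C(t, l i) * (1 - q i) ^ m i) < 1.
  move=> h; rewrite -[X in _ < X]Rmult_1_r; exact: Rmult_lt_compat_l G0 h.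
apply: Rlt_le_trans hR; apply: Rsum_lt => i.
rewrite hq.
have q01 : 0 <= q i <= 1.
  have hBA : INR (B i) <= INR A by apply: le_INR; apply/leP; exact: BA.
  have iA : 0 < / INR A by apply: Rinv_0_lt_compat.
  rewrite /q /Rdiv; split.
    by apply: Rmult_le_pos; [apply: pos_INR | lra].
  rewrite -(Rinv_r (INR A)); last lra.
  by apply: Rmult_le_compat_r; lra.
have hx : (1 - q i) ^ m i <= exp (- (q i * INR (n i))).
  apply: Rle_trans (pow_decr _ _ _ _ (mn i)) _; first lra.
  rewrite Ropp_mult_distr_l -exp_pow_n.
  apply: pow_incr; split; first lra.
  have := exp_ineq1_le (- q i); lra.
have hC : INR 'C(t, l i) < INR 2 ^ t.
  rewrite -INR_expn; apply: lt_INR; apply/ltP; apply: draws_lt.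
  exact: leq_trans r0 rt.
apply: Rle_lt_trans (Rmult_le_compat_l _ _ _ (pos_INR _) hx) _.
by apply: Rmult_lt_compat_r => //; apply: exp_pos.
Qed.

Close Scope R_scope.

Theorem lemma6p1 (s : nat) (n : 'I_s.+1 -> nat) (r : nat) :
  1 <= s -> (forall i, 0 < n i) -> 0 < r ->
  (exists (t : nat) (l : 'I_s.+1 -> nat),
      r <= t /\ (forall i, l i <= t) /\ \sum_(i < s.+1) l i = t /\
      Rle (\big[Rplus/R0]_(i < s.+1)
             Rmult (pow (INR 2) t)
                   (exp (Ropp (Rmult (Rdiv (INR ((t - l i) ^_ r)) (INR (t ^_ r)))
                                     (INR (n i))))))
          R1) ->
  choice_number_gt (@Kmulti_adj s n) r.
Proof.
move=> s1 npos r0 [t [l [rt [lt [sl hR]]]]] k chk.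
rewrite ltnNge; apply/negP => kr.
have chr : choosable (@Kmulti_adj s n) r.
  by move=> L hL; apply: chk => v; exact: leq_trans kr (hL v).
pose V := Kmulti_vertex n.
pose X := {ffun V -> {set 'I_t}}.
pose PG := fun v : V => [pred S : {set 'I_t} | #|S| == r].
pose G := [set f : X | [forall v, f v \in PG v]].
pose F (i : 'I_s.+1) (T : {set 'I_t}) (v : V) :=
  [pred S : {set 'I_t} | (#|S| == r) && ((tag v == i) ==> ~~ [disjoint S & T])].
pose Bad i T := [set f : X | [forall v, f v \in F i T v]].
pose BadU := \bigcup_(i < s.+1) \bigcup_(T : {set 'I_t} | #|T| == l i) Bad i T.
have hcount : #|BadU| < #|G|.
  have A0 : 0 < 'C(t, r) by rewrite bin_gt0.
  pose A := 'C(t, r).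
  pose B i := 'C(t - l i, r).
  pose m i := #|[pred v : V | tag v == i]|.
  pose K i := #|[pred v : V | tag v != i]|.
  have cardPG : forall v, #|PG v| = A.
    move=> v; rewrite /A; have := card_draws 'I_t r; rewrite card_ord => <-.
    by apply: eq_card => S; rewrite inE.
  have cardF : forall i (T : {set 'I_t}), #|T| = l i -> forall v : V,
      #|F i T v| = if tag v == i then A - B i else A.
    move=> i T cT v; case: eqP => tv; last first.
      rewrite -(cardPG v); apply: eq_card => S; rewrite !inE.
      by move/eqP/negbTE: tv => ->; rewrite andbT.
    pose D := [set S : {set 'I_t} | #|S| == r].
    pose E := [set S : {set 'I_t} | S \subset ~: T & #|S| == r].
    have hc : #|~: T| = t - l i.
      by apply/eqP; rewrite -(eqn_add2l (l i)) subnKC ?lt // -{1}cT cardsC card_ord.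
    have cE : #|E| = B i by rewrite /E cards_draws hc.
    have cD : #|D| = A by rewrite -(cardPG v); apply: eq_card => S; rewrite !inE.
    have sED : E \subset D by apply/subsetP => S; rewrite !inE => /andP [].
    rewrite -cE -cD -cardsDS //; apply: eq_card => S.
    rewrite !inE tv eqxx /= disjoints_subset.
    by case: (S \subset ~: T); case: (#|S| == r).
  have hprod : forall i a b, \prod_(v : V) (if tag v == i then a else b) = a ^ m i * b ^ K i.
    move=> i a b; rewrite (bigID (fun v => tag v == i)) /=.
    rewrite (eq_bigr (fun _ => a)); last by move=> v ->.
    rewrite (eq_bigr (fun _ => b) (P := fun v => tag v != i)); last by move=> v /negbTE ->.
    by rewrite !prod_nat_const.
  have cardG : forall i, #|G| = A ^ m i * A ^ K i.
    move=> i; rewrite card_fam -hprod; apply: eq_bigr => v _; by rewrite cardPG if_same.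
  have sumBad : forall i, \sum_(T : {set 'I_t} | #|T| == l i) #|Bad i T|
      = 'C(t, l i) * ((A - B i) ^ m i * A ^ K i).
    move=> i; rewrite (eq_bigr (fun _ => (A - B i) ^ m i * A ^ K i)); last first.
      move=> T /eqP cT; rewrite card_fam -hprod; apply: eq_bigr => v _; exact: cardF.
    rewrite sum_nat_const; congr (_ * _).
    have := card_draws 'I_t (l i); rewrite card_ord => <-.
    by apply: eq_card => S; rewrite inE.
  have hB : #|BadU| <= \sum_(i < s.+1) 'C(t, l i) * ((A - B i) ^ m i * A ^ K i).
    apply: leq_trans (union_bound _ _ _ _) _; apply: leq_sum => i _.
    by rewrite -sumBad; apply: union_bound.
  apply: leq_ltn_trans hB _.
  exact: (real_part s t r n l m K #|G| r0 rt lt (fun i => fiber_card s n i) cardG hR).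
have /subsetPn [f fG fB] : ~~ (G \subset BadU).
  by apply/negP => /subset_leq_card; rewrite leqNgt hcount.
have fr : forall v, #|f v| = r.
  by move=> v; move: fG; rewrite inE => /forallP /(_ v); rewrite inE => /eqP.
pose L := fun v : V => map val (enum (f v)).
have hL : forall v, r <= size (undup (L v)).
  move=> v; rewrite undup_id; last by rewrite map_inj_uniq ?enum_uniq //; exact: val_inj.
  by rewrite size_map -cardE fr.
have [c [cin cprop]] := chr L hL.
pose Sc i := [set x : 'I_t | [exists v : V, (tag v == i) && (c v == val x)]].
have hdisj : forall i j, i != j -> [disjoint Sc i & Sc j].
  move=> i j ij; rewrite -setI_eq0; apply/eqP/setP => x; rewrite !inE.
  apply/negP => /andP [/existsP [u /andP [/eqP tu /eqP cu]] /existsP [w /andP [/eqP tw /eqP cw]]].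
  have : Kmulti_adj u w by rewrite /Kmulti_adj tu tw.
  by move/cprop; rewrite cu cw eqxx.
have hsum := disj_sum _ _ _ hdisj.
rewrite card_ord in hsum.
have [i hi] : exists i, #|Sc i| <= l i.
  case: (pickP (fun i => #|Sc i| <= l i)) => [i hi | none]; first by exists i.
  exfalso.
  have : \sum_(i < s.+1) (l i + 1) <= \sum_(i < s.+1) #|Sc i|.
    by apply: leq_sum => i _; move: (none i) => /= /negbT; rewrite -ltnNge addn1.
  rewrite big_split /= sl sum1_card card_ord => h.
  have := leq_trans h hsum; by rewrite -{2}(addn0 t) leq_add2l.
have [T [sT cT]] : exists T : {set 'I_t}, Sc i \subset T /\ #|T| = l i.
  by apply: extend_set; rewrite hi card_ord lt.
move: fB; apply/negP; rewrite negbK.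
apply/bigcupP; exists i => //; apply/bigcupP; exists T; first by rewrite cT.
rewrite inE; apply/forallP => v; rewrite inE /= fr eqxx /=; apply/implyP => /eqP tv.
have := cin v; rewrite /L => /mapP [x]; rewrite mem_enum => xf cx.
have xT : x \in T.
  apply: (subsetP sT); rewrite inE; apply/existsP; exists v; by rewrite tv eqxx cx eqxx.
by apply/negP => /disjointFr /(_ xf); rewrite xT.
Qed.
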